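(* Let $m,K$ be positive integers and $b_1,\dots,b_{3m}$ positive integers with $K/4<b_i<K/2$ and $\sum_i b_i=mK$. Set $W=100(5m)^2K$, $a_i=b_i+W$, $L=3W+K$, $\epsilon=1/(400(5m)^2)$, $h=\lfloor 4\epsilon L\rfloor$, $H=L+h$, $\beta_0=h/H$, $\beta_i=a_i/H-1/3$ ($1\le i\le 3m$). Let $X$ be the multiset consisting of $a_1,\dots,a_{3m}$, $m$ copies of $-H$ and $m$ copies of $h$, and let $T_{\min}$ be a minimum-cost addition tree over $X$. If $z$ is an internal node of $T_{\min}$ with $z<0$, then $z$ is of the form $\lambda H$ or $(-1/3+\lambda)H$.
   Context: An addition tree over a multiset $X$ is a full binary tree whose leaves are labeled by the elements of $X$ (each used once), each internal node having value equal to the sum of its children's values; its cost is the sum of the absolute values of its internal nodes, and $T_{\min}$ minimizes the cost. Nodes are identified with their values. A ''$\lambda$'' denotes a sum of at most $5m$ numbers each of the form $\pm\beta_i$ with $0\le i\le 3m$. Every node value can be written as $(N/3+\lambda)H$ with $N$ an integer; since $|\lambda|\le 1/(500m)$, $N$ and the value of $\lambda$ are uniquely determined. *)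

(* Defs.v *)
From HB Require Import structures.
From mathcomp Require Import all_boot all_order all_algebra.
Set Implicit Arguments.
Unset Strict Implicit.
Unset Printing Implicit Defensive.
Import Order.TTheory GRing.Theory Num.Theory.
Local Open Scope ring_scope.

Inductive atree : Type :=
| ALeaf of int
| ANode of atree & atree.

Fixpoint aval (t : atree) : int :=
  match t with ALeaf x => x | ANode l r => aval l + aval r end.

Fixpoint aleaves (t : atree) : seq int :=
  match t with ALeaf x => [:: x] | ANode l r => aleaves l ++ aleaves r end.

Fixpoint ainternals (t : atree) : seq int :=
  match t with
  | ALeaf _ => [::]
  | ANode l r => aval (ANode l r) :: (ainternals l ++ ainternals r)
  end.

Definition acost (t : atree) : int := \sum_(z <- ainternals t) `|z|.

Definition addition_tree_over (X : seq int) (t : atree) : Prop :=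
  perm_eq (aleaves t) X.

Definition min_addition_tree (X : seq int) (t : atree) : Prop :=
  addition_tree_over X t /\
  forall t', addition_tree_over X t' -> acost t <= acost t'.

(* Parameters of the construction; b is indexed 1..3m (values at other
   indices are irrelevant). *)
Definition Wp (m K : nat) : int := (100 * (5 * m) ^ 2 * K)%:Z.
Definition ap (m K : nat) (b : nat -> nat) (i : nat) : int := (b i)%:Z + Wp m K.
Definition Lp (m K : nat) : int := 3 * Wp m K + K%:Z.
Definition epsp (m : nat) : rat := 1 / (400 * (5 * m%:R) ^+ 2).
Definition hp (m K : nat) : int := Num.floor (4 * epsp m * (Lp m K)%:~R).
Definition Hp (m K : nat) : int := Lp m K + hp m K.
Definition betap (m K : nat) (b : nat -> nat) (i : nat) : rat :=
  if i == 0%N then (hp m K)%:~R / (Hp m K)%:~R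
  else (ap m K b i)%:~R / (Hp m K)%:~R - 1 / 3.

Definition Xp (m K : nat) (b : nat -> nat) : seq int :=
  [seq ap m K b i | i <- iota 1 (3 * m)] ++ nseq m (- Hp m K) ++ nseq m (hp m K).

Definition is_lambda (m K : nat) (b : nat -> nat) (l : rat) : Prop :=
  exists s : seq (bool * nat),
    [/\ (size s <= 5 * m)%N, all (fun p => (p.2 <= 3 * m)%N) s &
        l = \sum_(p <- s) (if p.1 then - betap m K b p.2 else betap m K b p.2)].

(* Main.v *)
Require Import Defs.
From HB Require Import structures.
From mathcomp Require Import all_boot all_order all_algebra.
From mathcomp Require Import zify ring lra.
Import Order.TTheory GRing.Theory Num.Theory.
Local Open Scope ring_scope.

Lemma acost_node l r : acost (ANode l r) = `|aval l + aval r| + acost l + acost r.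
Proof. by rewrite /acost /= big_cons big_cat /= addrA. Qed.

Lemma acost_leaf x : acost (ALeaf x) = 0.
Proof. by rewrite /acost /= big_nil. Qed.

Lemma aval_sum t : aval t = \sum_(x <- aleaves t) x.
Proof.
elim: t => [x|l IHl r IHr] /=; first by rewrite big_seq1.
by rewrite big_cat /= IHl IHr.
Qed.

Fixpoint has_sub (p t : atree) : Prop :=
  t = p \/ (match t with ALeaf _ => False | ANode l r => has_sub p l \/ has_sub p r end).

Lemma has_sub_refl t : has_sub t t.
Proof. by case: t => /= *; left. Qed.

Lemma has_sub_leaves p t : has_sub p t -> {subset aleaves p <= aleaves t}.
Proof.
elim: t => [x|l IHl r IHr] /=; first by case=> // <-.
case=> [<- //|[H|H]] y Hy; rewrite mem_cat; apply/orP; [left; exact: IHl|right; exact: IHr].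
Qed.

Lemma has_sub_size p t : has_sub p t -> (size (aleaves p) <= size (aleaves t))%N.
Proof.
elim: t => [x|l IHl r IHr] /=; first by case=> // <-.
case=> [<- //|[H|H]]; rewrite size_cat.
  by apply: leq_trans (IHl H) (leq_addr _ _).
by apply: leq_trans (IHr H) (leq_addl _ _).
Qed.

Lemma has_sub_trans p q t : has_sub p q -> has_sub q t -> has_sub p t.
Proof.
move=> Hpq; elim: t => [x|l IHl r IHr].
  by move=> [E|//]; rewrite E.
move=> [E|[H|H]]; first by rewrite E.
  by right; left; exact: IHl.
by right; right; exact: IHr.
Qed.

Lemma internals_sub t z : z \in ainternals t ->
  exists l r, has_sub (ANode l r) t /\ aval l + aval r = z.
Proof.
elim: t => [x|l IHl r IHr] //=.
rewrite in_cons mem_cat => /orP[/eqP->|/orP[H|H]].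
- by exists l, r; split=> //; left.
- have [l' [r' [H1 H2]]] := IHl H; exists l', r'; split=> //; right; left; exact: H1.
- have [l' [r' [H1 H2]]] := IHr H; exists l', r'; split=> //; right; right; exact: H1.
Qed.

Lemma has_sub_parent v t : has_sub v t ->
  t = v \/ exists w, has_sub (ANode v w) t \/ has_sub (ANode w v) t.
Proof.
elim: t => [x|l IHl r IHr] /=; first by case=> // <-; left.
case=> [-> |[H|H]]; first by left.
- right; case: (IHl H) => [El|[w [Hw|Hw]]].
    by exists r; left; rewrite El; left.
  by exists w; left; right; left.
  by exists w; right; right; left.
- right; case: (IHr H) => [El|[w [Hw|Hw]]].
    by exists l; right; rewrite El; left.
  by exists w; left; right; right.
  by exists w; right; right; right.
Qed.

Lemma has_sub_replace p p' t : has_sub p t ->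
  perm_eq (aleaves p') (aleaves p) -> acost p' < acost p ->
  exists t', perm_eq (aleaves t') (aleaves t) /\ acost t' < acost t.
Proof.
move=> + Hperm Hc; elim: t => [x|l IHl r IHr].
  by move=> [E|//]; exists p'; rewrite E.
move=> [E|[H|H]]; first by exists p'; rewrite E.
- have [l' [Hp Hl]] := IHl H; exists (ANode l' r); split.
    by rewrite /= perm_cat2r.
  rewrite !acost_node (aval_sum l') (perm_big _ Hp) -aval_sum.
  by rewrite -!addrA ltrD2l ltrD2r.
- have [r' [Hp Hr]] := IHr H; exists (ANode l r'); split.
    by rewrite /= perm_cat2l.
  rewrite !acost_node (aval_sum r') (perm_big _ Hp) -aval_sum.
  by rewrite ltrD2l.
Qed.

Section Skel.
Variable h : int.
Definition cls (x : int) : int := if x < 0 then -3 else if h < x then 1 else 0.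
Definition phi (n : int) : int :=
  if 0 < n then (if (n %% 3)%Z == 1 then 1 else 0)
  else if n < 0 then (if (n %% 3)%Z == 0 then 0 else -1) else 0.
Ltac phis := rewrite /phi; repeat (case: ifP => ?); lia.

Fixpoint Nt t := match t with ALeaf x => cls x | ANode l r => Nt l + Nt r end.
Fixpoint sc t : int := match t with ALeaf x => if cls x == 1 then 1 else 0 | ANode l r => sc l + sc r end.
Fixpoint skc t : int := match t with ALeaf _ => 0 | ANode l r => `|Nt l + Nt r| + skc l + skc r end.
Definition delta l r := `|Nt l + Nt r| + phi (Nt l + Nt r) - phi (Nt l) - phi (Nt r).
Fixpoint dl t : int := match t with ALeaf _ => 0 | ANode l r => delta l r + dl l + dl r end.

Lemma cls_cases x : [\/ cls x = 1, cls x = -3 | cls x = 0].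
Proof. by rewrite /cls; case: ifP => _; [constructor 2|case: ifP => _; [constructor 1|constructor 3]]. Qed.

Lemma delta_ge0 l r : 0 <= delta l r.
Proof. rewrite /delta; move: (Nt l) (Nt r) => x y; phis. Qed.

Lemma dl_ge0 t : 0 <= dl t.
Proof. elim: t => [x|l IHl r IHr] //=; have := delta_ge0 l r; lia. Qed.

Lemma skc_id t : skc t = sc t - phi (Nt t) + dl t.
Proof.
elim: t => [x|l IHl r IHr] /=.
  by case: (cls_cases x) => ->.
rewrite IHl IHr /delta; lia.
Qed.

Lemma dl_sub l r t : has_sub (ANode l r) t -> delta l r <= dl t.
Proof.
elim: t => [x|l' IHl r' IHr]; first by case.
move=> [E|[H|H]] /=.
- case: E => -> ->; have := dl_ge0 l; have := dl_ge0 r; lia.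
- have := IHl H; have := dl_ge0 r'; have := delta_ge0 l' r'; lia.
- have := IHr H; have := dl_ge0 l'; have := delta_ge0 l' r'; lia.
Qed.

Lemma Nt_sum t : Nt t = \sum_(x <- aleaves t) cls x.
Proof. elim: t => [x|l IHl r IHr] /=; [by rewrite big_seq1 | by rewrite big_cat IHl IHr]. Qed.

Lemma sc_sum t : sc t = \sum_(x <- aleaves t) (if cls x == 1 then 1 else 0).
Proof. elim: t => [x|l IHl r IHr] /=; [by rewrite big_seq1 | by rewrite big_cat IHl IHr]. Qed.

Definition tight t := forall l r, has_sub (ANode l r) t -> delta l r = 0.

Lemma tight_N c t : tight t -> has_sub c t ->
  [/\ Nt c = -3 \/ Nt c = -2 \/ Nt c = -1 \/ Nt c = 0 \/ Nt c = 1 \/ Nt c = 2,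
      Nt c = 1 -> exists x, c = ALeaf x & Nt c = -3 -> exists x, c = ALeaf x].
Proof.
move=> Ht; case: c => [x|l r] Hs.
  by split=> [|_|_]; [case: (cls_cases x) => /= ->; lia|exists x|exists x].
have := Ht _ _ Hs; rewrite /delta /=; move: (Nt l) (Nt r) => u v D.
have : (u + v = -2 \/ u + v = -1 \/ u + v = 0 \/ u + v = 2) by move: D; phis.
move=> H; split; lia.
Qed.

End Skel.

Section PhiFacts.
Ltac phis := rewrite /phi; repeat (case: ifP => ?); lia.
Definition inset (x : int) := x = -3 \/ x = -2 \/ x = -1 \/ x = 0 \/ x = 1 \/ x = 2.

Lemma delta_m2 x y : inset x -> inset y ->
  `|x + y| + phi (x + y) - phi x - phi y = 0 -> x + y <= -2 ->
  (x = 1 /\ y = -3) \/ (x = -3 /\ y = 1).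
Proof. rewrite /inset => Hx Hy; phis. Qed.

Lemma delta_par1 x : inset x -> `|-2 + x| + phi (-2 + x) - phi (-2) - phi x = 0 -> x = 1.
Proof. rewrite /inset => Hx; case: Hx => [->|[->|[->|[->|[->|->]]]]] //; rewrite /phi /=; lia. Qed.

Lemma delta_par2 x : inset x -> `|x + -2| + phi (x + -2) - phi x - phi (-2) = 0 -> x = 1.
Proof. rewrite /inset => Hx; case: Hx => [->|[->|[->|[->|[->|->]]]]] //; rewrite /phi /=; lia. Qed.
End PhiFacts.

Section Err.
Variables h H : int.
Hypothesis H0 : 0 <= H.
Definition ee (x : int) : int := 3 * x - cls h x * H.
Fixpoint Et t := match t with ALeaf x => ee x | ANode l r => Et l + Et r end.
Fixpoint errsum t : int := match t with ALeaf _ => 0 | ANode l r => `|Et l + Et r| + errsum l + errsum r end.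

Lemma val3 t : 3 * aval t = Nt h t * H + Et t.
Proof. elim: t => [x|l IHl r IHr] /=; rewrite /ee; [lia|]. rewrite mulrDr IHl IHr mulrDl; lia. Qed.

Lemma Et_sum t : Et t = \sum_(x <- aleaves t) ee x.
Proof. elim: t => [x|l IHl r IHr] /=; [by rewrite big_seq1 | by rewrite big_cat IHl IHr]. Qed.

Lemma node_bounds N E : `|N * H + E| <= `|N| * H + `|E| /\ `|N| * H - `|E| <= `|N * H + E|.
Proof.
have E1 : `|N * H| = `|N| * H by rewrite normrM (ger0_norm H0).
split; first by rewrite -E1 ler_normD.
rewrite -E1; have := ler_normD (N * H + E) (- E); rewrite normrN addrK; lia.
Qed.

Lemma cost_le t : 3 * acost t <= H * skc h t + errsum t.
Proof.
elim: t => [x|l IHl r IHr]; first by rewrite acost_leaf /=; lia.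
rewrite acost_node /=.
have E3 : 3 * `|aval l + aval r| = `|(Nt h l + Nt h r) * H + (Et l + Et r)|.
  have -> : 3 * `|aval l + aval r| = `|3 * (aval l + aval r)| by rewrite normrM.
  by rewrite mulrDr !val3; congr `|_|; ring.
have [B1 _] := node_bounds (Nt h l + Nt h r) (Et l + Et r).
rewrite !mulrDr E3; lia.
Qed.

Lemma cost_ge t : H * skc h t <= 3 * acost t + errsum t.
Proof.
elim: t => [x|l IHl r IHr]; first by rewrite acost_leaf /=; lia.
rewrite acost_node /=.
have E3 : 3 * `|aval l + aval r| = `|(Nt h l + Nt h r) * H + (Et l + Et r)|.
  have -> : 3 * `|aval l + aval r| = `|3 * (aval l + aval r)| by rewrite normrM.
  by rewrite mulrDr !val3; congr `|_|; ring.
have [_ B2] := node_bounds (Nt h l + Nt h r) (Et l + Et r).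
rewrite !mulrDr E3; lia.
Qed.

Variable B : int.
Hypothesis B0 : 0 <= B.

Lemma size_leaves_gt0 t : (0 < size (aleaves t))%N.
Proof. elim: t => [x|l IHl r IHr] //=; rewrite size_cat; lia. Qed.

Lemma Et_bound t : (forall x, x \in aleaves t -> `|ee x| <= B) ->
  `|Et t| <= (size (aleaves t))%:Z * B.
Proof.
elim: t => [x|l IHl r IHr] /= Hx; first by rewrite mul1r; apply: Hx; rewrite mem_seq1.
have Hl : forall x, x \in aleaves l -> `|ee x| <= B by move=> y Hy; apply: Hx; rewrite mem_cat Hy.
have Hr : forall x, x \in aleaves r -> `|ee x| <= B by move=> y Hy; apply: Hx; rewrite mem_cat Hy orbT.
have := IHl Hl; have := IHr Hr.
rewrite size_cat PoszD mulrDl; have := ler_normD (Et l) (Et r); lia.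
Qed.

Lemma errsum_bound t : (forall x, x \in aleaves t -> `|ee x| <= B) ->
  errsum t <= ((size (aleaves t))%:Z ^+ 2) * B.
Proof.
elim: t => [x|l IHl r IHr] /= Hx; first by rewrite expr1n mul1r.
have Hl : forall x, x \in aleaves l -> `|ee x| <= B by move=> y Hy; apply: Hx; rewrite mem_cat Hy.
have Hr : forall x, x \in aleaves r -> `|ee x| <= B by move=> y Hy; apply: Hx; rewrite mem_cat Hy orbT.
have := IHl Hl; have := IHr Hr; have := @Et_bound l Hl; have := @Et_bound r Hr.
have := size_leaves_gt0 l; have := size_leaves_gt0 r.
rewrite size_cat PoszD.
move: (size (aleaves l)) (size (aleaves r)) => a c.
have := ler_normD (Et l) (Et r).
move=> N1 ha hc E1 E2 S1 S2.
have K1 : (a%:Z + c%:Z) <= (a%:Z + c%:Z) ^+ 2 - a%:Z ^+ 2 - c%:Z ^+ 2 by rewrite !expr2; nia.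
have K2 := ler_wpM2r B0 K1.
rewrite !mulrDl !mulNr in K2; lia.
Qed.
End Err.

Lemma pattern_improve (HH a a' : int) p : 0 < 3 * a -> 3 * a < HH -> 0 < 3 * a' -> 3 * a' < HH ->
  (p = ANode (ANode (ALeaf a) (ALeaf (- HH))) (ALeaf a') \/
   p = ANode (ANode (ALeaf (- HH)) (ALeaf a)) (ALeaf a') \/
   p = ANode (ALeaf a') (ANode (ALeaf a) (ALeaf (- HH))) \/
   p = ANode (ALeaf a') (ANode (ALeaf (- HH)) (ALeaf a))) ->
  exists p', perm_eq (aleaves p') (aleaves p) /\ acost p' < acost p.
Proof.
move=> h1 h2 h3 h4 Hp; exists (ANode (ANode (ALeaf a) (ALeaf a')) (ALeaf (- HH))).
case: Hp => [->|[->|[->|->]]]; split;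
  rewrite ?acost_node ?acost_leaf /=; try (apply/permP => P /=; lia); lia.
Qed.

Section Params.
Variables (m K : nat) (b : nat -> nat).
Hypothesis m0 : (0 < m)%N.
Hypothesis K0 : (0 < K)%N.

Definition MM := ((5 * m) ^ 2)%N.

Lemma MM_ge : (25 <= MM)%N.
Proof. rewrite /MM; have : (5 <= 5 * m)%N by lia. move=> H; have := leq_mul H H. by rewrite expnS expn1. Qed.

Lemma Wp_eq : Wp m K = (100 * MM * K)%N%:Z.
Proof. by []. Qed.

Lemma Lp_eq : Lp m K = (300 * MM * K + K)%N%:Z.
Proof. rewrite /Lp Wp_eq; lia. Qed.

Lemma hp_x : 4 * epsp m * (Lp m K)%:~R = ((300 * MM * K + K)%N)%:R / ((100 * MM)%N)%:R :> rat.
Proof.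
have HM : ((100 * MM)%N)%:R != 0 :> rat by rewrite pnatr_eq0; have := MM_ge; lia.
rewrite /epsp Lp_eq /MM.
have -> : (5 * m%:R) ^+ 2 = ((5 * m) ^ 2)%N%:R :> rat by rewrite natrX natrM.
have -> : ((300 * (5 * m) ^ 2 * K + K)%N%:Z)%:~R = ((300 * (5 * m) ^ 2 * K + K)%N)%:R :> rat by [].
move: HM; rewrite /MM !natrM => HM.
field. by rewrite pnatr_eq0 -lt0n.
Qed.

Lemma h_ge : (3 * K)%N%:Z <= hp m K.
Proof.
rewrite /hp floor_ge_int hp_x ler_pdivlMr; last by rewrite ltr0n; have := MM_ge; lia.
rewrite -natrM ler_nat; lia.
Qed.

Lemma h_le : hp m K <= (4 * K)%N%:Z.
Proof.
have : hp m K < (4 * K)%N%:Z + 1; last by lia.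
rewrite /hp floor_lt_int hp_x ltr_pdivrMr; last by rewrite ltr0n; have := MM_ge; lia.
have -> : (((4 * K)%N%:Z + 1)%:~R : rat) = ((4 * K + 1)%N)%:R by rewrite -PoszD.
rewrite -natrM ltr_nat; have := MM_ge; nia.
Qed.


Hypothesis hb : forall i, (1 <= i <= 3 * m)%N ->
     [/\ (0 < b i)%N, (K < 4 * b i)%N & (2 * b i < K)%N].

Local Notation h := (hp m K).
Local Notation H := (Hp m K).
Local Notation X := (Xp m K b).

Lemma H_eq : H = (300 * MM * K + K)%N%:Z + h.
Proof. by rewrite /Hp Lp_eq. Qed.

Lemma H_big : (300 * MM * K)%N%:Z < H.
Proof. rewrite H_eq; have := h_ge; lia. Qed.

Lemma H_gt0 : 0 < H.
Proof. have := H_big; lia. Qed.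

Lemma ap_facts i : (1 <= i <= 3 * m)%N ->
  [/\ h < ap m K b i, 0 < 3 * ap m K b i, 3 * ap m K b i < H
    & `|3 * ap m K b i - H| <= h + K%:Z].
Proof.
move=> Hi; have [b1 b2 b3] := hb i Hi.
have MK : (2500 * K <= 100 * MM * K)%N.
  have := leq_mul (leq_mul (leqnn 100) MM_ge) (leqnn K); lia.
have E1 : (300 * MM * K + K)%N%:Z = 3 * (100 * MM * K)%N%:Z + K%:Z.
  by rewrite -mulnA -[(100 * MM * K)%N]mulnA; lia.
have := h_ge; have := h_le.
rewrite /ap Wp_eq H_eq E1; move: (hp m K) (b i) (100 * MM * K)%N b1 b2 b3 MK => hv bi Q.
move=> *; split; lia.
Qed.

Lemma mem_X x : x \in X ->
  (exists2 i, (1 <= i <= 3 * m)%N & x = ap m K b i) \/ x = - H \/ x = h.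
Proof.
rewrite /Xp !mem_cat => /or3P[/mapP[i Hi ->]|/nseqP[-> _]|/nseqP[-> _]].
- by left; exists i => //; move: Hi; rewrite mem_iota; lia.
- by right; left.
- by right; right.
Qed.

Lemma cls_ap i : (1 <= i <= 3 * m)%N -> cls h (ap m K b i) = 1.
Proof.
move=> /ap_facts[h1 h2 _ _]; rewrite /cls; move: (ap m K b i) (hp m K) h1 h2 => a hv h1 h2.
case: ifP => ?; [lia|]; case: ifP => ?; lia.
Qed.

Lemma cls_H : cls h (- H) = -3.
Proof. have := H_gt0; rewrite /cls; move: (Hp m K) (hp m K) => HH hv; case: ifP => ?; lia. Qed.

Lemma cls_h : cls h h = 0.
Proof. have := h_ge; rewrite /cls; move: (hp m K) => hv; case: ifP => ?; [lia|]; case: ifP => ?; lia. Qed.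

Lemma leaf_facts x : x \in X ->
  [/\ `|ee h H x| <= 3 * h + K%:Z, (cls h x = 1 -> 0 < 3 * x < H)
    & (cls h x = -3 -> x = - H)].
Proof.
move=> Hx; have := h_ge; have := H_gt0.
case/mem_X: Hx => [[i Hi ->]|[->|->]]; rewrite /ee.
- rewrite (cls_ap i Hi); have [h1 h2 h3 h4] := ap_facts i Hi.
  move: (ap m K b i) (hp m K) (Hp m K) h1 h2 h3 h4 => a hv HH *; split; lia.
- rewrite cls_H; move: (hp m K) (Hp m K) => hv HH *; split; lia.
- rewrite cls_h; move: (hp m K) (Hp m K) => hv HH *; split; lia.
Qed.

Lemma sum_const_seq (s : seq int) (f : int -> int) c :
  (forall x, x \in s -> f x = c) -> \sum_(x <- s) f x = c * (size s)%:Z.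
Proof.
elim: s => [|y s IH] Hf; first by rewrite big_nil mulr0.
rewrite big_cons IH ?Hf ?mem_head //=; last by move=> x Hx; apply: Hf; rewrite in_cons Hx orbT.
lia.
Qed.

Lemma sum_X (f : int -> int) (c1 c2 c3 : int) :
  (forall i, (1 <= i <= 3 * m)%N -> f (ap m K b i) = c1) -> f (- H) = c2 -> f h = c3 ->
  \sum_(x <- X) f x = c1 * (3 * m)%N%:Z + c2 * m%:Z + c3 * m%:Z.
Proof.
move=> H1 H2 H3; rewrite /Xp !big_cat /=.
rewrite (@sum_const_seq _ _ c1); last by move=> x /mapP[i Hi ->]; apply: H1; move: Hi; rewrite mem_iota; lia.
rewrite (@sum_const_seq _ _ c2); last by move=> x /nseqP[-> _].
rewrite (@sum_const_seq _ _ c3); last by move=> x /nseqP[-> _].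
by rewrite size_map size_iota !size_nseq addrA.
Qed.

Lemma size_X : size X = (5 * m)%N.
Proof. rewrite /Xp !size_cat size_map size_iota !size_nseq; lia. Qed.


Definition gg j := ANode (ANode (ANode (ALeaf (ap m K b (1 + 3 * j)%N))
  (ALeaf (ap m K b (1 + 3 * j).+1))) (ALeaf (- H))) (ALeaf (ap m K b (1 + 3 * j).+2)).

Fixpoint FF n := match n with
  | 0%N => ANode (gg 0) (ALeaf h)
  | n'.+1 => ANode (FF n') (ANode (gg n) (ALeaf h)) end.

Lemma Nt_node l r : Nt h (ANode l r) = Nt h l + Nt h r. Proof. by []. Qed.
Lemma Nt_leaf x : Nt h (ALeaf x) = cls h x. Proof. by []. Qed.
Lemma skc_node l r : skc h (ANode l r) = `|Nt h l + Nt h r| + skc h l + skc h r. Proof. by []. Qed.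
Lemma skc_leaf x : skc h (ALeaf x) = 0. Proof. by []. Qed.
Lemma leaves_node l r : aleaves (ANode l r) = aleaves l ++ aleaves r. Proof. by []. Qed.
Lemma leaves_leaf x : aleaves (ALeaf x) = [:: x]. Proof. by []. Qed.

Lemma leaves_gg j : aleaves (gg j) = [:: ap m K b (1 + 3 * j)%N; ap m K b (1 + 3 * j).+1; - H; ap m K b (1 + 3 * j).+2].
Proof. by []. Qed.

Lemma gg_facts j : (j < m)%N -> Nt h (gg j) = 0 /\ skc h (gg j) = 3.
Proof.
move=> Hj.
have c1 : cls h (ap m K b (1 + 3 * j)%N) = 1 by apply: cls_ap; lia.
have c2 : cls h (ap m K b (1 + 3 * j).+1) = 1 by apply: cls_ap; lia.
have c3 : cls h (ap m K b (1 + 3 * j).+2) = 1 by apply: cls_ap; lia.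
rewrite /gg !skc_node !Nt_node !Nt_leaf !skc_leaf c1 c2 c3 cls_H.
split; [lia|]. by [].
Qed.

Lemma FF_facts n : (n < m)%N -> [/\ Nt h (FF n) = 0, skc h (FF n) = 3 * (n.+1)%:Z &
  perm_eq (aleaves (FF n))
    ([seq ap m K b i | i <- iota 1 (3 * n.+1)] ++ nseq n.+1 (- H) ++ nseq n.+1 h)].
Proof.
elim: n => [|n IH] Hn.
  have [g1 g2] := gg_facts 0 Hn.
  have -> : FF 0 = ANode (gg 0) (ALeaf h) by [].
  split.
  - move: (gg 0) g1 => G g1; rewrite !Nt_node Nt_leaf g1 cls_h; by [].
  - move: (gg 0) g1 g2 => G g1 g2; rewrite !skc_node !Nt_leaf !skc_leaf g1 g2 cls_h; by [].
  rewrite (leaves_node (gg 0) (ALeaf h)) leaves_gg leaves_leaf muln0 addn0.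
  apply/permP => P; rewrite /= ?count_cat /=; lia.
have [N1 S1 P1] := IH (ltnW Hn).
have [g1 g2] := gg_facts n.+1 Hn.
have -> : FF n.+1 = ANode (FF n) (ANode (gg n.+1) (ALeaf h)) by [].
split.
- move: (gg n.+1) g1 => G g1; rewrite !Nt_node Nt_leaf N1 g1 cls_h; by [].
- move: (gg n.+1) g1 g2 => G g1 g2; rewrite !skc_node !Nt_node !Nt_leaf !skc_leaf N1 g1 g2 S1 cls_h; lia.
- rewrite (_ : (3 * n.+2 = 3 * n.+1 + 3)%N); last by lia.
  rewrite iotaD map_cat (leaves_node (FF n)) (leaves_node (gg n.+1)) leaves_gg leaves_leaf; apply/permP => P.
  have := (permP P1) P.
  rewrite ?count_cat /= ?count_cat /=. lia.
Qed.

Definition T0 := FF m.-1.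

Lemma T0_facts : [/\ Nt h T0 = 0, skc h T0 = 3 * m%:Z & perm_eq (aleaves T0) X].
Proof.
have Hm : (m.-1 < m)%N by lia.
have := FF_facts; move/(_ _ Hm); by rewrite prednK.
Qed.

Definition Bd := 3 * h + K%:Z.

Lemma Bd_ge0 : 0 <= Bd.
Proof. have := h_ge; rewrite /Bd; lia. Qed.


Lemma HB2 : 2 * (MM%:Z * Bd) < H.
Proof.
have Hb := H_big; have h1 := h_le.
have E1 : (300 * MM * K)%N%:Z = 300 * (MM%:Z * K%:Z) by rewrite -mulnA !PoszM.
have E : MM%:Z * Bd <= MM%:Z * (13 * K%:Z).
  by apply: ler_wpM2l; rewrite /Bd; lia.
have E2 : MM%:Z * (13 * K%:Z) = 13 * (MM%:Z * K%:Z) by ring.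
rewrite E1 in Hb; rewrite E2 in E.
have Q0 : 0 < MM%:Z * K%:Z by rewrite -PoszM ltz_nat muln_gt0 K0 andbT; have := MM_ge; lia.
move: E Hb Q0; move: (MM%:Z * K%:Z) (MM%:Z * Bd) => Q R.
lia.
Qed.

Lemma HB5 : (5 * m)%N%:Z * Bd < H.
Proof.
have E : (5 * m)%N%:Z * Bd <= MM%:Z * Bd.
  apply: ler_wpM2r; first exact: Bd_ge0.
  rewrite lez_nat /MM expnS expn1 leq_pmulr //; lia.
have := HB2; have := Bd_ge0; have : 0 <= MM%:Z * Bd by apply: mulr_ge0; [lia|exact: Bd_ge0].
move: E; move: ((5 * m)%N%:Z * Bd) (MM%:Z * Bd) => A B1; lia.
Qed.

Lemma sc_X t : perm_eq (aleaves t) X -> sc h t = 3 * m%:Z.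
Proof.
move=> Hp; rewrite sc_sum (perm_big _ Hp).
rewrite (@sum_X (fun x => if cls h x == 1 then 1 else 0) 1 0 0).
- lia.
- by move=> i Hi; rewrite cls_ap.
- by rewrite cls_H.
- by rewrite cls_h.
Qed.

Lemma Nt_X t : perm_eq (aleaves t) X -> Nt h t = 0.
Proof.
move=> Hp; rewrite Nt_sum (perm_big _ Hp).
rewrite (@sum_X (cls h) 1 (-3) 0).
- lia.
- by move=> i Hi; rewrite cls_ap.
- by rewrite cls_H.
- by rewrite cls_h.
Qed.

Lemma leaves_X t T : perm_eq (aleaves T) X -> has_sub t T ->
  forall x, x \in aleaves t -> x \in X.
Proof. by move=> Hp Hs x Hx; rewrite -(perm_mem Hp); apply: has_sub_leaves Hs _ Hx. Qed.

Lemma errsum_X T : perm_eq (aleaves T) X -> errsum h H T <= MM%:Z * Bd.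
Proof.
move=> Hp.
have := @errsum_bound h H (ltW H_gt0) Bd Bd_ge0 T.
rewrite (perm_size Hp) size_X.
have -> : ((5 * m)%N%:Z) ^+ 2 = MM%:Z by rewrite /MM expr2 -PoszM expnS expn1.
apply; move=> x Hx.
have [l1 _ _] := leaf_facts x (leaves_X T T Hp (has_sub_refl T) x Hx); exact: l1.
Qed.

Lemma Et_small t T : perm_eq (aleaves T) X -> has_sub t T ->
  `|Et h H t| <= (5 * m)%N%:Z * Bd.
Proof.
move=> Hp Hs.
have := @Et_bound h H (ltW H_gt0) Bd Bd_ge0 t.
have Hsz : (size (aleaves t) <= 5 * m)%N by rewrite -size_X -(perm_size Hp); apply: has_sub_size.
move=> H1; apply: le_trans (H1 _) _.
  by move=> x Hx; have [l1 _ _] := leaf_facts x (leaves_X t T Hp Hs x Hx).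
by apply: ler_wpM2r; [exact: Bd_ge0| rewrite lez_nat].
Qed.

Lemma tight_min T : min_addition_tree X T -> tight h T.
Proof.
move=> [HT Hm] l r Hs.
have [N0 S0 P0] := T0_facts.
have Hd := @dl_sub h l r T Hs.
have D0 := delta_ge0 h l r.
apply/eqP; rewrite eq_le D0 andbT leNgt; apply/negP => Hlt.
have Hsk : skc h T = 3 * m%:Z + dl h T.
  rewrite skc_id (sc_X T HT) (Nt_X T HT) /phi /=; lia.
have C1 := Hm T0 P0.
have C2 := @cost_ge h H (ltW H_gt0) T.
have C3 := @cost_le h H (ltW H_gt0) T0.
have E1 := errsum_X T HT.
have E2 := errsum_X T0 P0.
rewrite S0 in C3; rewrite Hsk in C2.
have Hdl : 1 <= dl h T by lia.
have M1 : H * (3 * m%:Z + 1) <= H * (3 * m%:Z + dl h T).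
  by apply: ler_wpM2l; [exact: ltW H_gt0| lia].
have HB := HB2.
rewrite !mulrDr mulr1 in M1; rewrite mulrDr in C2.
move: M1 C1 C2 C3 E1 E2 HB.
move: (H * (3 * m%:Z)) (H * dl h T) (MM%:Z * Bd) => A1 A2 A3.
lia.
Qed.

Definition idx (x : int) : nat :=
  if x == h then 0%N
  else nth 0%N (iota 1 (3 * m)) (index x [seq ap m K b i | i <- iota 1 (3 * m)]).

Lemma idx_le x : (idx x <= 3 * m)%N.
Proof.
rewrite /idx; case: (x == h); first exact: leq0n.
set k := index _ _.
case: (ltnP k (3 * m)) => Hk.
  rewrite nth_iota //; lia.
by rewrite nth_default // size_iota.
Qed.

Lemma Hr_neq0 : (H%:~R : rat) != 0.
Proof. by rewrite intr_eq0 (gt_eqF H_gt0). Qed.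

Lemma beta_idx x : x \in X -> 0 <= x ->
  betap m K b (idx x) = (ee h H x)%:~R / (3 * H%:~R).
Proof.
have HHr := Hr_neq0.
case/mem_X => [[i Hi ->]|[->|->]] Hx.
- have [a1 a2 a3 a4] := ap_facts i Hi.
  have Hne : (ap m K b i == h) = false by apply/negbTE; rewrite neq_lt a1 orbT.
  set s := [seq ap m K b j | j <- iota 1 (3 * m)].
  have Hin : ap m K b i \in s by apply: map_f; rewrite mem_iota; lia.
  have Hk : (index (ap m K b i) s < 3 * m)%N.
    by move: Hin; rewrite -index_mem /s size_map size_iota.
  set k := index _ s in Hk *.
  have Hj : nth 0%N (iota 1 (3 * m)) k = (1 + k)%N by rewrite nth_iota.
  have Eap : ap m K b (1 + k) = ap m K b i.
    rewrite -Hj -(nth_map 0%N (ap m K b 0)); last by rewrite size_iota.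
    by rewrite (nth_index _ Hin).
  have Ek : ((1 + k)%N == 0%N) = false by [].
  rewrite /idx Hne Hj /betap Ek Eap /ee (cls_ap i Hi).
  move: (ap m K b i) (Hp m K) HHr => A HH HHr.
  rewrite intrB intrM mul1r.
  have -> : (3 : int)%:~R = 3 :> rat by [].
  by field; rewrite HHr.
- exfalso; move: Hx; have := H_gt0; move: (Hp m K) => HH; lia.
- rewrite /idx eqxx /betap eqxx /ee cls_h mul0r subr0 intrM.
  have -> : (3 : int)%:~R = 3 :> rat by [].
  move: (hp m K) (Hp m K) HHr => hv HH HHr.
  by field; rewrite HHr.
Qed.

Lemma leaf1 c T : perm_eq (aleaves T) X -> tight h T -> has_sub c T -> Nt h c = 1 ->
  exists a, [/\ c = ALeaf a, cls h a = 1, 0 < 3 * a & 3 * a < H].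
Proof.
move=> HT Ht Hs E.
have [_ N1 _] := @tight_N h c T Ht Hs.
have [a Ea] := N1 E.
have Hx : a \in X by apply: (leaves_X c T HT Hs); rewrite Ea mem_seq1.
have [_ l2 _] := leaf_facts a Hx.
rewrite Ea Nt_leaf in E.
have [l2a l2b] := andP (l2 E).
by exists a.
Qed.

Lemma leafm3 c T : perm_eq (aleaves T) X -> tight h T -> has_sub c T -> Nt h c = -3 ->
  c = ALeaf (- H).
Proof.
move=> HT Ht Hs E.
have [_ _ N3] := @tight_N h c T Ht Hs.
have [a Ea] := N3 E.
have Hx : a \in X by apply: (leaves_X c T HT Hs); rewrite Ea mem_seq1.
have [_ _ l3] := leaf_facts a Hx.
rewrite Ea Nt_leaf in E.
by rewrite Ea (l3 E).
Qed.

Lemma no_bad T a v : min_addition_tree X T -> tight h T -> cls h a = 1 ->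
  0 < 3 * a -> 3 * a < H ->
  (v = ANode (ALeaf a) (ALeaf (- H)) \/ v = ANode (ALeaf (- H)) (ALeaf a)) ->
  has_sub v T -> False.
Proof.
move=> [HT Hm] Ht ca a1 a2 Hv Hs.
have Nv : Nt h v = -2.
  by case: Hv => ->; rewrite Nt_node !Nt_leaf ca cls_H.
have Hsz : size (aleaves T) = (5 * m)%N by rewrite (perm_size HT) size_X.
case: (has_sub_parent v T Hs) => [Ev | [w Hw]].
  move: Hsz; rewrite Ev; case: Hv => ->; rewrite !leaves_node !leaves_leaf /=; lia.
have Hsw : has_sub w T.
  by case: Hw => Hw; apply: has_sub_trans Hw; right; [right|left]; apply: has_sub_refl.
have [NNw _ _] := @tight_N h w T Ht Hsw.
have Nw : Nt h w = 1.
  case: Hw => Hw; have D := Ht _ _ Hw; move: D; rewrite /delta Nv => D.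
    exact: delta_par1 (Nt h w) NNw D.
  exact: delta_par2 (Nt h w) NNw D.
have [a' [Ew ca' b1 b2]] := leaf1 w T HT Ht Hsw Nw.
have fin : forall p, has_sub p T ->
  (p = ANode (ANode (ALeaf a) (ALeaf (- H))) (ALeaf a') \/
   p = ANode (ANode (ALeaf (- H)) (ALeaf a)) (ALeaf a') \/
   p = ANode (ALeaf a') (ANode (ALeaf a) (ALeaf (- H))) \/
   p = ANode (ALeaf a') (ANode (ALeaf (- H)) (ALeaf a))) -> False.
  move=> p Hps Hshape.
  have [p' [Pp Cp]] := @pattern_improve H a a' p a1 a2 b1 b2 Hshape.
  have [T' [PT' CT']] := @has_sub_replace p p' T Hps Pp Cp.
  have Hle := Hm T' (perm_trans PT' HT).
  by move: CT'; rewrite ltNge Hle.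
rewrite Ew in Hw.
case: Hw => Hw; case: Hv => Ev; rewrite Ev in Hw; apply: (fin _ Hw).
- by left.
- by right; left.
- by right; right; left.
- by right; right; right.
Qed.

Lemma core T : min_addition_tree X T -> forall z, z \in ainternals T -> z < 0 ->
    (exists l, is_lambda m K b l /\ z%:~R = l * H%:~R :> rat) \/
    (exists l, is_lambda m K b l /\ z%:~R = (- (1 / 3) + l) * H%:~R :> rat).
Proof.
move=> Hmin z Hz zneg.
have Ht := tight_min T Hmin.
case: (Hmin) => HT Hm.
have [l [r [Hs Hv]]] := internals_sub T z Hz.
have HH := H_gt0.
have HB := HB5.
have Eb := Et_small (ANode l r) T HT Hs.
have v3 := @val3 h H (ltW H_gt0) (ANode l r).
have Eav : aval (ANode l r) = z by rewrite -Hv.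
rewrite Eav in v3.
have [NN _ _] := @tight_N h _ T Ht Hs.
have Nv : Nt h (ANode l r) = 0 \/ Nt h (ANode l r) = -1.
  case: NN => [E|[E|[E|[E|[E|E]]]]].
  - by have := leafm3 (ANode l r) T HT Ht Hs E.
  - exfalso.
    have Hsl : has_sub l T by apply: has_sub_trans Hs; right; left; apply: has_sub_refl.
    have Hsr : has_sub r T by apply: has_sub_trans Hs; right; right; apply: has_sub_refl.
    have [NNl _ _] := @tight_N h l T Ht Hsl.
    have [NNr _ _] := @tight_N h r T Ht Hsr.
    have D := Ht l r Hs.
    rewrite Nt_node in E.
    have E2 : Nt h l + Nt h r <= -2 by rewrite E.
    case: (delta_m2 (Nt h l) (Nt h r) NNl NNr D E2) => [[El Er]|[El Er]].
    + have [a [Ea ca a1 a2]] := leaf1 l T HT Ht Hsl El.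
      have Eb' := leafm3 r T HT Ht Hsr Er.
      have Hsh : ANode l r = ANode (ALeaf a) (ALeaf (- H)) \/ ANode l r = ANode (ALeaf (- H)) (ALeaf a).
        by left; rewrite Ea Eb'.
      exact: (no_bad T a (ANode l r) Hmin Ht ca a1 a2 Hsh Hs).
    + have [a [Ea ca a1 a2]] := leaf1 r T HT Ht Hsr Er.
      have Eb' := leafm3 l T HT Ht Hsl El.
      have Hsh : ANode l r = ANode (ALeaf a) (ALeaf (- H)) \/ ANode l r = ANode (ALeaf (- H)) (ALeaf a).
        by right; rewrite Ea Eb'.
      exact: (no_bad T a (ANode l r) Hmin Ht ca a1 a2 Hsh Hs).
  - by right.
  - by left.
  - by have [a [Ea _ _ _]] := leaf1 (ANode l r) T HT Ht Hs E.
  - exfalso; rewrite E in v3.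
    move: v3 Eb HB zneg; move: (Et h H (ANode l r)) ((5 * m)%N%:Z * Bd) (Hp m K) HH => EE BB HH' HH.
    lia.
have Hsub : forall x, x \in aleaves (ANode l r) -> x \in X := leaves_X (ANode l r) T HT Hs.
have Hlam : is_lambda m K b ((Et h H (ANode l r))%:~R / (3 * H%:~R)).
  exists [seq (false, idx x) | x <- [seq x <- aleaves (ANode l r) | 0 <= x]]; split.
  - rewrite size_map size_filter; apply: leq_trans (count_size _ _) _.
    rewrite -size_X -(perm_size HT); exact: has_sub_size Hs.
  - rewrite all_map; apply/allP => x _; exact: idx_le.
  - rewrite big_map big_filter big_mkcond Et_sum rmorph_sum mulr_suml.
    apply: eq_big_seq => x Hx.
    have HxX := Hsub x Hx.
    case: ifP => H0x.
    + exact: (esym (beta_idx x HxX H0x)).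
    + have Ex : x = - H.
        case/mem_X: (HxX) => [[i Hi Ei]|[Ei|Ei]].
        * have [_ c2 _ _] := ap_facts i Hi.
          by move: H0x c2; rewrite Ei; move: (ap m K b i) => A; lia.
        * exact: Ei.
        * by move: H0x; have := h_ge; rewrite Ei; move: (hp m K) => hv; lia.
      rewrite Ex /ee cls_H.
      have -> : 3 * - H - -3 * H = 0 by move: (Hp m K) => HH'; lia.
      by rewrite rmorph0 mul0r.
have HHr := Hr_neq0.
case: Nv => EN; rewrite EN in v3.
- left; exists ((Et h H (ANode l r))%:~R / (3 * H%:~R)); split; first exact: Hlam.
  have v3' : z + z + z = Et h H (ANode l r) by move: v3; move: (Et h H (ANode l r)) (Hp m K) => EE HH'; lia.
  have v3r : (z%:~R + z%:~R + z%:~R : rat) = (Et h H (ANode l r))%:~R by rewrite -!intrD v3'.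
  move: v3r HHr; move: (z%:~R : rat) ((Et h H (ANode l r))%:~R : rat) (H%:~R : rat) => zq eq hq v3r HHr.
  rewrite -v3r; by field; rewrite HHr.
- right; exists ((Et h H (ANode l r))%:~R / (3 * H%:~R)); split; first exact: Hlam.
  have v3' : z + z + z = - H + Et h H (ANode l r) by move: v3; move: (Et h H (ANode l r)) (Hp m K) => EE HH'; lia.
  have gen : forall (zz EE HH' : int), zz + zz + zz = - HH' + EE ->
      (zz%:~R + zz%:~R + zz%:~R : rat) = - HH'%:~R + EE%:~R.
    by move=> zz EE HH' Hq; rewrite -intrN -!intrD Hq.
  have v3r := gen _ _ _ v3'.
  move: v3r HHr; move: (z%:~R : rat) ((Et h H (ANode l r))%:~R : rat) (H%:~R : rat) => zq eq hq v3r HHr.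
  have Eeq : eq = zq + zq + zq + hq by rewrite v3r; ring.
  rewrite Eeq; by field; rewrite HHr.
Qed.

End Params.

Theorem lemma2p9 (m K : nat) (b : nat -> nat) (T : atree) :
  (0 < m)%N -> (0 < K)%N ->
  (forall i, (1 <= i <= 3 * m)%N ->
     [/\ (0 < b i)%N, (K < 4 * b i)%N & (2 * b i < K)%N]) ->
  (\sum_(1 <= i < (3 * m).+1) b i = m * K)%N ->
  min_addition_tree (Xp m K b) T ->
  forall z, z \in ainternals T -> z < 0 ->
    (exists l, is_lambda m K b l /\ z%:~R = l * (Hp m K)%:~R :> rat) \/
    (exists l, is_lambda m K b l /\ z%:~R = (- (1 / 3) + l) * (Hp m K)%:~R :> rat).
Proof.
move=> m0 K0 hb _ Hmin z Hz zneg.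
exact: (@core m K b m0 K0 hb T Hmin z Hz zneg).
Qed.
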